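(* Let $\mu,\sigma$ be nonzero constants, let $K$ be an open interval not containing $0$, and let $W$ be a smooth function on $K$ such that $R(z):=(zW(z))'$ satisfies $R(z)\neq0$ for all $z\in K$. Then $R$ satisfies $$-\sigma zRR'''+\sigma zR'R''-2\sigma RR''-9\mu R^2R'-zR'+2R=0$$ on $K$ if and only if there is a constant $c_1$ such that $W$ satisfies the third-order equation $$\sigma W'''=-3\sigma\frac{W''}{z}-9\mu (W')^2-9\mu\frac{WW'}{z}+c_1\frac{W'}{z^2}+c_1\frac{W}{z^3}+\frac1z$$ on $K$. *)

(* Defs.v *)
From Stdlib Require Import Reals.
From Coquelicot Require Import Coquelicot.
Open Scope R_scope.

Definition in_open_interval (a b : Rbar) (z : R) : Prop :=
  Rbar_lt a z /\ Rbar_lt z b.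

Definition smooth_on (a b : Rbar) (f : R -> R) : Prop :=
  forall (n : nat) (z : R), in_open_interval a b z -> ex_derive_n f n z.

Definition Rfun (W : R -> R) : R -> R := fun z => Derive (fun t => t * W t) z.

(* Main.v *)
Require Import Defs.
From Stdlib Require Import Reals Lra Lia Classical.
From Coquelicot Require Import Coquelicot.
Open Scope R_scope.

Lemma I_loc (a b : Rbar) z : in_open_interval a b z ->
  locally z (fun t => in_open_interval a b t).
Proof.
  intros H. exact (open_and _ _ (open_Rbar_gt a) (open_Rbar_lt b) z H).
Qed.

Lemma ext_I (a b : Rbar) (f g : R -> R) n z :
  (forall t, in_open_interval a b t -> f t = g t) ->
  in_open_interval a b z -> Derive_n f n z = Derive_n g n z.
Proof.
  intros H Hz. apply Derive_n_ext_loc.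
  eapply filter_imp; [|exact (I_loc a b z Hz)]. intros t Ht; now apply H.
Qed.


Lemma derS_I (a b : Rbar) (f g : R -> R) n z :
  (forall t, in_open_interval a b t -> Derive f t = g t) ->
  in_open_interval a b z -> Derive_n f (S n) z = Derive_n g n z.
Proof.
  intros H Hz.
  replace (S n) with (n + 1)%nat by lia.
  rewrite <- (Derive_n_comp f n 1).
  apply (ext_I a b); auto.
Qed.

Section S.
Variables (a b : Rbar) (W : R -> R).
Hypothesis HW : smooth_on a b W.

Lemma DW k t : in_open_interval a b t ->
  is_derive (Derive_n W k) t (Derive_n W (S k) t).
Proof.
  intros Ht. simpl. apply Derive_correct. exact (HW (S k) t Ht).
Qed.

Lemma Dh (c : R) k t : in_open_interval a b t ->
  is_derive (fun t => c * Derive_n W k t + t * Derive_n W (S k) t) t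
    ((c + 1) * Derive_n W (S k) t + t * Derive_n W (S (S k)) t).
Proof.
  intros Ht.
  pose proof (DW k t Ht) as H1. pose proof (DW (S k) t Ht) as H2.
  assert (A: is_derive (fun t => c * Derive_n W k t) t (c * Derive_n W (S k) t))
    by (apply is_derive_scal; exact H1).
  assert (B: is_derive (fun t => t * Derive_n W (S k) t) t
     (1 * Derive_n W (S k) t + t * Derive_n W (S (S k)) t)).
  { pose proof (is_derive_mult (fun t:R => t) (Derive_n W (S k)) t 1 _ (is_derive_id t) H2
      ltac:(intros; apply Rmult_comm)) as X. exact X. }
  pose proof (is_derive_plus _ _ t _ _ A B) as X.
  replace ((c + 1) * Derive_n W (S k) t + t * Derive_n W (S (S k)) t) with
    (c * Derive_n W (S k) t + (1 * Derive_n W (S k) t + t * Derive_n W (S (S k)) t)) by ring.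
  exact X.
Qed.

Lemma Rfun_eq t : in_open_interval a b t ->
  Rfun W t = 1 * Derive_n W 0 t + t * Derive_n W 1 t.
Proof.
  intros Ht. unfold Rfun. apply is_derive_unique.
  pose proof (DW 0 t Ht) as H1. simpl Derive_n in *.
  replace (1 * W t + t * Derive W t) with
    (plus (mult 1 (W t)) (mult t (Derive W t))).
  2:{ unfold plus, mult; simpl; unfold mult; simpl; ring. }
  exact (is_derive_mult (fun t:R => t) W t 1 _ (is_derive_id t) H1
      ltac:(intros; apply Rmult_comm)).
Qed.

Definition h (c : R) (k : nat) := fun t => c * Derive_n W k t + t * Derive_n W (S k) t.

Lemma hder c k t : in_open_interval a b t ->
  Derive (h c k) t = h (c + 1) (S k) t.
Proof. intros Ht. apply is_derive_unique. exact (Dh c k t Ht). Qed.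

Lemma Dn_h c k n t : in_open_interval a b t ->
  Derive_n (h c k) (S n) t = Derive_n (h (c+1) (S k)) n t.
Proof. intros Ht. apply (derS_I a b); auto. intros; now apply hder. Qed.

Lemma Rn0 z : in_open_interval a b z -> Rfun W z = h 1 0 z.
Proof. intros; now apply Rfun_eq. Qed.

Lemma Rn1 z : in_open_interval a b z -> Derive_n (Rfun W) 1 z = h (1+1) 1 z.
Proof.
  intros Hz. rewrite (ext_I a b (Rfun W) (h 1 0)); auto.
  2:{ intros; now apply Rfun_eq. }
  rewrite Dn_h; auto.
Qed.

Lemma Rn2 z : in_open_interval a b z -> Derive_n (Rfun W) 2 z = h (1+1+1) 2 z.
Proof.
  intros Hz. rewrite (ext_I a b (Rfun W) (h 1 0)); auto.
  2:{ intros; now apply Rfun_eq. }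
  rewrite Dn_h; auto. rewrite Dn_h; auto.
Qed.

Lemma Rn3 z : in_open_interval a b z -> Derive_n (Rfun W) 3 z = h (1+1+1+1) 3 z.
Proof.
  intros Hz. rewrite (ext_I a b (Rfun W) (h 1 0)); auto.
  2:{ intros; now apply Rfun_eq. }
  rewrite Dn_h; auto. rewrite Dn_h; auto. rewrite Dn_h; auto.
Qed.

End S.

Lemma Fder (W : R -> R) mu sigma t : t <> 0 -> 
  let D := Derive_n W in
  (forall k, ex_derive (D k) t) ->
  (1 * D 0%nat t + t * D 1%nat t) <> 0 ->
  is_derive (fun t => (sigma*t^3*D 3%nat t + 3*sigma*t^2*D 2%nat t + 9*mu*t^3*D 1%nat t^2 + 9*mu*t^2*D 0%nat t * D 1%nat t - t^2)/(1 * D 0%nat t + t * D 1%nat t)) t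
   (let R0 := 1 * D 0%nat t + t * D 1%nat t in
    let R1 := (1+1) * D 1%nat t + t * D 2%nat t in
    let R2 := (1+1+1) * D 2%nat t + t * D 3%nat t in
    let R3 := (1+1+1+1) * D 3%nat t + t * D 4%nat t in
    - t * (- sigma * t * R0 * R3 + sigma * t * R1 * R2 - 2 * sigma * R0 * R2
      - 9 * mu * R0 ^ 2 * R1 - t * R1 + 2 * R0) / R0^2).
Proof.
intros Ht D Hd H0.
unfold D in *.
auto_derive.
2:{ cbn [Derive_n].
  set (d1 := Derive (fun x => W x) t) in *.
  set (d2 := Derive (fun x : R => Derive (fun x0 : R => W x0) x) t) in *.
  set (d3 := Derive (fun x : R => Derive (fun x0 : R => Derive (fun x1 : R => W x1) x0) x) t) in *.
  set (d4 := Derive (fun x : R => Derive (fun x0 : R => Derive (fun x1 : R => Derive (fun x2 : R => W x2) x1) x0) x) t) in *.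
  cbv zeta. field. intro E; apply H0; change (Derive_n W 0 t) with (W t); change (Derive_n W 1 t) with d1; lra. }
repeat split; auto; first [exact (Hd 0%nat) | exact (Hd 1%nat) | exact (Hd 2%nat) | exact (Hd 3%nat)].
Qed.

Lemma convex_I (a b : Rbar) x y c : in_open_interval a b x -> in_open_interval a b y ->
  Rmin x y <= c <= Rmax x y -> in_open_interval a b c.
Proof.
  unfold in_open_interval, Rmin, Rmax; intros [H1 H2] [H3 H4] H5.
  destruct (Rle_dec x y);
  destruct a as [a| |]; destruct b as [b| |]; simpl in *; try tauto; lra.
Qed.

Lemma const_I (a b : Rbar) (F : R -> R) :
  (forall t, in_open_interval a b t -> is_derive F t 0) ->
  forall x y, in_open_interval a b x -> in_open_interval a b y -> F x = F y.
Proof.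
  intros HF x y Hx Hy.
  destruct (MVT_gen F x y (fun _ => 0)) as [c [_ Hc]].
  - intros t Ht. apply HF. apply (convex_I a b x y); auto; lra.
  - intros t Ht. apply continuity_pt_filterlim.
    apply (ex_derive_continuous (K:=R_AbsRing) (V:=R_NormedModule)).
    exists 0. apply HF. apply (convex_I a b x y); auto.
  - lra.
Qed.
Theorem mainTheorem6 (mu sigma : R) (a b : Rbar) (W : R -> R) :
  mu <> 0 -> sigma <> 0 ->
  Rbar_lt a b ->
  ~ in_open_interval a b 0 ->
  smooth_on a b W ->
  (forall z, in_open_interval a b z -> Rfun W z <> 0) ->
  ((forall z, in_open_interval a b z ->
      let R0 := Rfun W z in
      let R1 := Derive_n (Rfun W) 1 z in
      let R2 := Derive_n (Rfun W) 2 z in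
      let R3 := Derive_n (Rfun W) 3 z in
      - sigma * z * R0 * R3 + sigma * z * R1 * R2 - 2 * sigma * R0 * R2
      - 9 * mu * R0 ^ 2 * R1 - z * R1 + 2 * R0 = 0)
   <->
   (exists c1 : R, forall z, in_open_interval a b z ->
      let W0 := W z in
      let W1 := Derive_n W 1 z in
      let W2 := Derive_n W 2 z in
      let W3 := Derive_n W 3 z in
      sigma * W3 = - 3 * sigma * W2 / z - 9 * mu * W1 ^ 2 - 9 * mu * W0 * W1 / z
                   + c1 * W1 / z ^ 2 + c1 * W0 / z ^ 3 + 1 / z)).
Proof.
  intros Hmu Hs Hab H0 HW HR.
  set (F := fun t => (sigma*t^3*Derive_n W 3 t + 3*sigma*t^2*Derive_n W 2 t
     + 9*mu*t^3*Derive_n W 1 t^2 + 9*mu*t^2*Derive_n W 0 t * Derive_n W 1 t - t^2)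
     /(1 * Derive_n W 0 t + t * Derive_n W 1 t)).
  assert (Hz0 : forall z, in_open_interval a b z -> z <> 0).
  { intros z Hz E; subst; tauto. }
  assert (HR0 : forall z, in_open_interval a b z -> 1 * Derive_n W 0 z + z * Derive_n W 1 z <> 0).
  { intros z Hz. rewrite <- (Rfun_eq a b W HW z Hz). now apply HR. }
  assert (HFd : forall z, in_open_interval a b z ->
    is_derive F z
   (let R0 := 1 * Derive_n W 0 z + z * Derive_n W 1 z in
    let R1 := (1+1) * Derive_n W 1 z + z * Derive_n W 2 z in
    let R2 := (1+1+1) * Derive_n W 2 z + z * Derive_n W 3 z in
    let R3 := (1+1+1+1) * Derive_n W 3 z + z * Derive_n W 4 z in
    - z * (- sigma * z * R0 * R3 + sigma * z * R1 * R2 - 2 * sigma * R0 * R2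
      - 9 * mu * R0 ^ 2 * R1 - z * R1 + 2 * R0) / R0^2)).
  { intros z Hz. apply Fder; auto. intros k. exact (HW (S k) z Hz). }
  split.
  - intros HE.
    destruct (classic (exists z0, in_open_interval a b z0)) as [[z0 Hz0'] | Hno].
    2:{ exists 0. intros z Hz. exfalso. apply Hno. now exists z. }
    exists (F z0). intros z Hz. cbv zeta.
    assert (HFc : F z = F z0).
    { apply (const_I a b F); auto. intros t Ht.
      pose proof (HFd t Ht) as X. cbv zeta in X.
      pose proof (HE t Ht) as E. cbv zeta in E.
      rewrite (Rn0 a b W HW t Ht), (Rn1 a b W HW t Ht), (Rn2 a b W HW t Ht),
        (Rn3 a b W HW t Ht) in E. unfold h in E.
      rewrite E in X. replace (- t * 0 / (1 * Derive_n W 0 t + t * Derive_n W 1 t) ^ 2) with 0 in X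
        by (field; intro; apply (HR0 t Ht); lra). exact X. }
    rewrite <- HFc. unfold F.
    pose proof (Hz0 z Hz) as Q1. pose proof (HR0 z Hz) as Q2. change (Derive_n W 0 z) with (W z) in *.
    field. repeat split; try (intro; apply Q2; lra); auto.
  - intros [c1 Hc]. intro z. intro Hz. cbv zeta.
    rewrite (Rn0 a b W HW z Hz), (Rn1 a b W HW z Hz), (Rn2 a b W HW z Hz),
        (Rn3 a b W HW z Hz). unfold h.
    assert (HFc : forall t, in_open_interval a b t -> c1 = F t).
    { intros t Ht. pose proof (Hc t Ht) as E. cbv zeta in E.
      pose proof (Hz0 t Ht) as Q1. pose proof (HR0 t Ht) as Q2. unfold F.
      change (Derive_n W 0 t) with (W t) in *.
      replace (sigma * t ^ 3 * Derive_n W 3 t) with (t^3 * (sigma * Derive_n W 3 t)) by ring.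
      rewrite E. field. repeat split; try (intro; apply Q2; lra); auto. }
    assert (X0 : is_derive F z 0).
    { apply (is_derive_ext_loc (fun _ => c1)).
      - eapply filter_imp; [|exact (I_loc a b z Hz)]. intros t Ht. now apply HFc.
      - exact (is_derive_const (K:=R_AbsRing) (V:=R_NormedModule) c1 z). }
    pose proof (is_derive_unique _ _ _ X0) as U0.
    pose proof (is_derive_unique _ _ _ (HFd z Hz)) as U1.
    rewrite U0 in U1. cbv zeta in U1.
    pose proof (Hz0 z Hz) as Q1. pose proof (HR0 z Hz) as Q2.
    set (E := - sigma * z * _ * _ + _ - _ - _ - _ + _) in U1 |- *.
    assert (HE : E = (- z * E / (1 * Derive_n W 0 z + z * Derive_n W 1 z) ^ 2)
                * ((1 * Derive_n W 0 z + z * Derive_n W 1 z) ^ 2 / - z)) by (field; repeat split; try (intro; apply Q2; lra); auto).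
    rewrite HE, <- U1. ring.
Qed.
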